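(* Let $s\in[-\infty,0]$, let $\rho$ be a $2\times2$ density matrix and $X,Y$ be $2\times2$ Hermitian matrices. Then $|\operatorname{Re}\zeta_\rho^s(X,Y)|^2\le I^s(\rho,X)\,I^s(\rho,Y)\le|\zeta_\rho^s(X,Y)|^2,$ where $\operatorname{Re}\zeta_\rho^s(X,Y)=\frac14\left(I^s(\rho,X+Y)-I^s(\rho,X-Y)\right)$ and $\operatorname{Im}\zeta_\rho^s(X,Y)=\frac{1}{2i}\mathrm{Tr}\big[\rho[X,Y]\big]$.
   Context: Write $\rho=\sum_{i=1}^2\lambda_i|\psi_i\rangle\langle\psi_i|$ (orthonormal eigenbasis, $\lambda_1\ge\lambda_2\ge0$). For $-\infty<s<0$ and $a_1,a_2>0$ let $m_s(a_1,a_2)=\left(\frac{a_1^s+a_2^s}{2}\right)^{1/s}$; $m_0(a_1,a_2)=\sqrt{a_1a_2}$; $m_{-\infty}(a_1,a_2)=\min\{a_1,a_2\}$; and $m_s(a,0)=m_s(0,a)=m_s(0,0)=0$. Define $\zeta_\rho^s(X,Y)=\mathrm{Tr}[\rho X^\dagger Y]-\sum_{i,j} m_s(\lambda_i,\lambda_j)\langle\psi_i|X^\dagger|\psi_j\rangle\langle\psi_j|Y|\psi_i\rangle$ and $I^s(\rho,X)=\zeta_\rho^s(X,X)$. $[X,Y]=XY-YX$. *)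

(* Defs.v *)
From HB Require Import structures.
From mathcomp Require Import all_boot all_order all_algebra.
From mathcomp Require Import complex.
From mathcomp Require Import reals constructive_ereal exp.
Set Implicit Arguments. Unset Strict Implicit. Unset Printing Implicit Defensive.
Import Order.TTheory GRing.Theory Num.Theory.
Local Open Scope ring_scope.

Definition adjmx (R : rcfType) m n (A : 'M[R[i]]_(m, n)) : 'M[R[i]]_(n, m) :=
  (map_mx (@conjc R) A)^T.

Definition is_hermitian (R : rcfType) n (A : 'M[R[i]]_n) : Prop := adjmx A = A.

Definition density_matrix (R : rcfType) n (rho : 'M[R[i]]_n) : Prop :=
  [/\ is_hermitian rho,
      (forall v : 'cV[R[i]]_n, 0 <= (adjmx v *m rho *m v) 0 0)
    & \tr rho = 1].

Definition msmean (R : realType) (s : \bar R) (a b : R) : R :=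
  if (a == 0) || (b == 0) then 0 else
  match s with
  | -oo%E => Num.min a b
  | (r%:E)%E => if r == 0 then Num.sqrt (a * b)
                else powR ((powR a r + powR b r) / 2) r^-1
  | +oo%E => 0 (* not used: s <= 0 *)
  end.

(* zeta_rho^s(X,Y) for rho = sum_i lam i |psi i><psi i| *)
Definition zeta (R : realType) (s : \bar R) (lam : 'I_2 -> R)
    (psi : 'I_2 -> 'cV[R[i]]_2) (rho X Y : 'M[R[i]]_2) : R[i] :=
  \tr (rho *m adjmx X *m Y)
  - \sum_(i < 2) \sum_(j < 2)
      ((msmean s (lam i) (lam j))%:C)%C
      * (adjmx (psi i) *m adjmx X *m psi j) 0 0
      * (adjmx (psi j) *m Y *m psi i) 0 0.

Definition Ifisher (R : realType) (s : \bar R) (lam : 'I_2 -> R)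
    (psi : 'I_2 -> 'cV[R[i]]_2) (rho X : 'M[R[i]]_2) : R[i] :=
  zeta s lam psi rho X X.

(* Main.v *)
Require Import Defs.
From HB Require Import structures.
From mathcomp Require Import all_boot all_order all_algebra.
From mathcomp Require Import complex.
From mathcomp Require Import reals constructive_ereal exp.
From mathcomp Require Import ring lra.
Import Order.TTheory GRing.Theory Num.Theory.
Local Open Scope ring_scope.


Lemma ms_sym (R : realType) (s : \bar R) (a b : R) : msmean s a b = msmean s b a.
Proof.
rewrite /msmean orbC. case: ifP => _.
reflexivity.
case: s => [r| |].
- case: eqP => _. rewrite [a * b]mulrC. reflexivity. rewrite [powR a r + _]addrC. reflexivity.
- reflexivity.
- rewrite minC. reflexivity.
Qed.

Lemma ms_diag (R : realType) (s : \bar R) (a : R) : (s <= 0)%E -> 0 <= a -> msmean s a a = a.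
Proof.
move=> hs ha; rewrite /msmean orbb; case: eqP => [->//|a0].
case: s hs => [r| |] //= hr; last by rewrite minxx.
case: eqP => r0; first by rewrite -expr2 sqrtr_sqr ger0_norm.
rewrite mulrDl -splitr -powRrM mulfV; last exact/eqP.
exact: powRr1.
Qed.

Lemma ms_bounds (R : realType) (s : \bar R) (l0 l1 : R) : (s <= 0)%E -> 0 <= l1 -> l1 <= l0 ->
  l1 <= msmean s l0 l1 <= l0.
Proof.
move=> hs h1 h10; rewrite /msmean.
have [e|l1n0] := eqVneq l1 0; first by rewrite e orbT lexx -e.
have p1 : 0 < l1 by rewrite lt_def l1n0.
have p0 : 0 < l0 by apply: lt_le_trans h10.
rewrite (gt_eqF p0) /=.
case: s hs => [r| |] //= hr; last by rewrite min_r //; apply/andP; split.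
case: eqP => r0.
  rewrite -{1}(ger0_norm (ltW p1)) -{3}(ger0_norm (ltW p0)) -!sqrtr_sqr.
  by rewrite !ler_wsqrtr // expr2 ?ler_pM2r ?ler_pM2l.
have rn : r < 0 by rewrite lt_neqAle; apply/andP; split; [exact/eqP | rewrite -lee_fin].
set P0 := powR l0 r; set P1 := powR l1 r.
have q0 : 0 < P0 by apply: powR_gt0.
have q1 : 0 < P1 by apply: powR_gt0.
have L01 : ln l1 <= ln l0 by rewrite ler_ln // posrE.
have lP : ln P0 <= ln P1 by rewrite /P0 /P1 !ln_powR; apply: ler_wnM2l => //; exact: ltW.
have P01 : P0 <= P1 by rewrite -ler_ln // posrE.
set A := (P0 + P1) / 2.
have qA : 0 < A by rewrite /A; lra.
have lA0 : ln P0 <= ln A by rewrite ler_ln ?posrE // /A; lra.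
have lA1 : ln A <= ln P1 by rewrite ler_ln ?posrE // /A; lra.
move: lA0 lA1; rewrite /P0 /P1 !ln_powR => lA0 lA1.
have tr : r^-1 * r = 1 by rewrite mulVf //; apply/eqP.
have tn : r^-1 < 0 by rewrite invr_lt0.
have qm : 0 < powR A r^-1 by apply: powR_gt0.
rewrite -(ler_ln (x:=l1)) ?posrE // -(ler_ln (y:=l0)) ?posrE // ln_powR.
apply/andP; split.
  rewrite -[ln l1]mul1r -tr -mulrA; apply: ler_wnM2l => //; exact: ltW.
rewrite -[ln l0]mul1r -tr -mulrA; apply: ler_wnM2l => //; exact: ltW.
Qed.

Local Open Scope complex_scope.
Lemma final (R : realType) (l0 l1 m : R) (u v : R[i]) :
  l1 <= m -> m <= l0 ->
  let I := fun a : R[i] => (l0-m)%:C * a * a^*%C + (l1-m)%:C * a^*%C * a in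
  let z := (l0-m)%:C * u * v^*%C + (l1-m)%:C * u^*%C * v in
  [/\ (((complex.Re z) ^+ 2)%:C) <= I u * I v,
      I u * I v <= `|z| ^+ 2,
      ((complex.Re z)%:C) = (I (u + v) - I (u - v)) / 4
    & ((complex.Im z)%:C) = ((l0%:C * (u * v^*%C - v * u^*%C) + l1%:C * (u^*%C * v - v^*%C * u))) / (2 * 'i%C)].
Proof.
move=> h1 h2 I z.
case: u v @I @z => [u1 u2] [v1 v2] I z.
rewrite /I /z -add_Re2_Im2.
simpc; rewrite /=.
have cE : forall (x y x' y' : R), x = x' -> y = y' -> x +i* y = x' +i* y' by move=> ????->->.
set a := l0 - m; set b := l1 - m.
have hab : a * b <= 0 by rewrite /a /b; nra.
split.
- apply/andP; split; first by apply/eqP; ring.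
  rewrite -subr_ge0.
  set L := (X in X - _). set Rr := (X in _ - X).
  have -> : L - Rr = (a+b)^+2 * (u1*v2 - u2*v1)^+2 by rewrite /L /Rr; ring.
  by rewrite mulr_ge0 // sqr_ge0.
- apply/andP; split; first by apply/eqP; ring.
  rewrite -subr_ge0.
  set L := (X in X - _). set Rr := (X in _ - X).
  have -> : L - Rr = - 4 * (a * b) * (u1*v2 - u2*v1)^+2 by rewrite /L /Rr; ring.
  apply: mulr_ge0; last exact: sqr_ge0. nra.
- by apply: (cE); rewrite ?expr0n ?addr0 /=; field.
- rewrite /real_complex_def; apply: (cE); rewrite !expr0n /= ?add0r /a /b; by field.
Qed.

Local Close Scope complex_scope.
Section Mx.
Variable R : realType.
Local Notation C := R[i].

Lemma adjmxE m n (A : 'M[C]_(m,n)) i j : adjmx A i j = conjc (A j i).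
Proof. by rewrite /adjmx !mxE. Qed.

Lemma adjmxK m n (A : 'M[C]_(m,n)) : adjmx (adjmx A) = A.
Proof. by apply/matrixP => i j; rewrite !adjmxE conjcK. Qed.

Lemma adjmxM m n p (A : 'M[C]_(m,n)) (B : 'M[C]_(n,p)) :
  adjmx (A *m B) = adjmx B *m adjmx A.
Proof. by rewrite /adjmx map_mxM trmx_mul. Qed.

Lemma adjmxD m n (A B : 'M[C]_(m,n)) : adjmx (A + B) = adjmx A + adjmx B.
Proof. by apply/matrixP => i j; rewrite /adjmx !mxE rmorphD. Qed.

Lemma adjmxB m n (A B : 'M[C]_(m,n)) : adjmx (A - B) = adjmx A - adjmx B.
Proof. by apply/matrixP => i j; rewrite /adjmx !mxE rmorphB. Qed.

Lemma sum2 (V : nmodType) (F : 'I_2 -> V) : \sum_(i < 2) F i = F 0 + F 1.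
Proof. by rewrite big_ord_recl big_ord1; congr (F _ + F _); apply: val_inj. Qed.

Lemma mx11 (P Q : 'M[C]_1) : (P *m Q) 0 0 = P 0 0 * Q 0 0.
Proof. by rewrite mxE big_ord1. Qed.

Variable psi : 'I_2 -> 'cV[C]_2.
Local Notation c M i j := ((adjmx (psi i) *m M *m psi j) 0 0).

Lemma cD (A B : 'M[C]_2) i j : c (A + B) i j = c A i j + c B i j.
Proof. by rewrite mulmxDr mulmxDl mxE. Qed.

Lemma cBm (A B : 'M[C]_2) i j : c (A - B) i j = c A i j - c B i j.
Proof. by rewrite mulmxDr mulmxDl mulmxN mulNmx !mxE. Qed.

Lemma cH (A : 'M[C]_2) i j : adjmx A = A -> c A j i = conjc (c A i j).
Proof. by move=> hA; rewrite -adjmxE !adjmxM adjmxK hA mulmxA. Qed.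

Hypothesis ortho : forall i j, adjmx (psi i) *m psi j = (i == j)%:R%:M.

Lemma complete : \sum_k psi k *m adjmx (psi k) = 1%:M.
Proof.
pose U : 'M[C]_2 := \matrix_(a, k) psi k a 0.
have h : adjmx U *m U = 1%:M.
  apply/matrixP => i j.
  have := congr1 (fun M : 'M[C]_1 => M 0 0) (ortho i j).
  rewrite /= !mxE eqxx mulr1n => <-.
  by apply: eq_bigr => a _; rewrite !adjmxE !mxE.
have h2 := mulmx1C h.
apply/matrixP => a b; rewrite -h2 summxE [RHS]mxE.
apply: eq_bigr => k _; by rewrite !mxE big_ord1 adjmxE.
Qed.



Lemma cM (A B : 'M[C]_2) i j : c (A *m B) i j = \sum_k c A i k * c B k j.
Proof.
have -> : A *m B = A *m (\sum_k psi k *m adjmx (psi k)) *m B by rewrite complete mulmx1.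
rewrite mulmx_sumr !mulmx_suml mulmx_sumr mulmx_suml summxE.
by apply: eq_bigr => k _; rewrite -mx11 !mulmxA.
Qed.







Lemma trrho (lam : 'I_2 -> R) (M : 'M[C]_2) :
  \tr ((\sum_(i < 2) ((lam i)%:C)%C *: (psi i *m adjmx (psi i))) *m M)
  = \sum_(i < 2) ((lam i)%:C)%C * c M i i.
Proof.
rewrite mulmx_suml raddf_sum; apply: eq_bigr => i _.
rewrite -scalemxAl /= mxtraceZ; congr (_ * _).
by rewrite -mulmxA mxtrace_mulC /mxtrace big_ord1.
Qed.

Lemma zetaE (s : \bar R) (lam : 'I_2 -> R) (A B : 'M[C]_2) :
  (s <= 0)%E -> 0 <= lam 0 -> 0 <= lam 1 -> adjmx A = A -> adjmx B = B ->
  zeta s lam psi (\sum_(i < 2) ((lam i)%:C)%C *: (psi i *m adjmx (psi i))) A B =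
  ((lam 0 - msmean s (lam 0) (lam 1))%:C)%C * c A 0 1 * conjc (c B 0 1)
  + ((lam 1 - msmean s (lam 0) (lam 1))%:C)%C * conjc (c A 0 1) * c B 0 1.
Proof.
move=> hs h0 h1 hA hB; rewrite /zeta hA -mulmxA trrho.
rewrite !sum2 !cM !sum2 (cH _ 0 1 hA) (cH _ 0 1 hB).
rewrite (ms_sym _ s (lam 1) (lam 0)) (@ms_diag _ _ _ hs h0) (@ms_diag _ _ _ hs h1).
rewrite !rmorphB /=.
ring.
Qed.

Lemma trcomm (lam : 'I_2 -> R) (A B : 'M[C]_2) :
  adjmx A = A -> adjmx B = B ->
  \tr ((\sum_(i < 2) ((lam i)%:C)%C *: (psi i *m adjmx (psi i))) *m (A *m B - B *m A)) =
  ((lam 0)%:C)%C * (c A 0 1 * conjc (c B 0 1) - c B 0 1 * conjc (c A 0 1))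
  + ((lam 1)%:C)%C * (conjc (c A 0 1) * c B 0 1 - conjc (c B 0 1) * c A 0 1).
Proof.
move=> hA hB; rewrite trrho !sum2 !cBm !cM !sum2 (cH _ 0 1 hA) (cH _ 0 1 hB).
ring.
Qed.

End Mx.

Theorem theorem6 (R : realType) (s : \bar R) (rho X Y : 'M[R[i]]_2)
    (lam : 'I_2 -> R) (psi : 'I_2 -> 'cV[R[i]]_2) :
  (s <= 0)%E ->
  density_matrix rho ->
  (forall i j : 'I_2, adjmx (psi i) *m psi j = (i == j)%:R%:M) ->
  lam 1 <= lam 0 -> 0 <= lam 1 ->
  rho = \sum_(i < 2) ((lam i)%:C)%C *: (psi i *m adjmx (psi i)) ->
  is_hermitian X -> is_hermitian Y ->
  let z := zeta s lam psi rho X Y in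
  let Iq := Ifisher s lam psi rho in
  [/\ (((complex.Re z) ^+ 2)%:C)%C <= Iq X * Iq Y,
      Iq X * Iq Y <= `|z| ^+ 2,
      ((complex.Re z)%:C)%C = (Iq (X + Y) - Iq (X - Y)) / 4
    & ((complex.Im z)%:C)%C = \tr (rho *m (X *m Y - Y *m X)) / (2 * 'i%C)].
Proof.
move=> hs _ ortho h10 h1 -> hX hY z Iq.
have h0 : 0 <= lam 0 by apply: le_trans h10.
have /andP [mb1 mb2] := @ms_bounds _ _ _ _ hs h1 h10.
have hXY : adjmx (X + Y) = X + Y by rewrite adjmxD hX hY.
have hXmY : adjmx (X - Y) = X - Y by rewrite adjmxB hX hY.
rewrite /z /Iq /Ifisher !(@zetaE _ _ ortho) // (@trcomm _ _ ortho) // (@cD _ psi X Y 0 1) (@cBm _ psi X Y 0 1).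
case: (@final _ _ _ _ ((adjmx (psi 0) *m X *m psi 1) 0 0) ((adjmx (psi 0) *m Y *m psi 1) 0 0) mb1 mb2) => F1 F2 F3 F4.
split.
exact: F1.
exact: F2.
exact: F3.
exact: F4.
Qed.
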